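(* Let $I$ be an index set and $(X_i)_{i\in I}$ topological spaces. Then $\prod_{i\in I}X_i$ is a Baire space if and only if $\prod_{i\in I}\mathcal K(X_i)$ is a Baire space (both with the product topology).
   Context: A topological space is a Baire space if every countable intersection of dense open subsets is dense. Krom space: for a space $X$ with topology $\tau$, let $\downarrow\tau^{\omega}$ be the set of sequences $f=(f(0),f(1),\dots)$ of nonempty open subsets of $X$ with $f(k+1)\subseteq f(k)$ for all $k$, and for $n\ge1$ let $\downarrow\tau^{n}$ be the set of such decreasing finite sequences of length $n$. $\mathcal K(X)=\{f\in\downarrow\tau^{\omega}:\bigcap_n f(n)\neq\emptyset\}$, topologized as a subspace of $\tau^{\omega}$ where $\tau$ carries the discrete topology; a base consists of the sets $[h]=\{g\in\mathcal K(X): g(k)=h(k)\text{ for all }k<n\}$ for $h\in\downarrow\tau^{n}$, $n\ge1$. *)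

(* Defs.v *)
From Stdlib Require Import List.

Record TopSpace := {
  carrier :> Type;
  is_open : (carrier -> Prop) -> Prop;
  open_setT : is_open (fun _ => True);
  open_setI : forall U V, is_open U -> is_open V -> is_open (fun x => U x /\ V x);
  open_bigU : forall F : (carrier -> Prop) -> Prop,
      (forall U, F U -> is_open U) -> is_open (fun x => exists U, F U /\ U x)
}.

Definition dense {T : Type} (op : (T -> Prop) -> Prop) (D : T -> Prop) : Prop :=
  forall U, op U -> (exists x, U x) -> exists x, U x /\ D x.

Definition baire (T : Type) (op : (T -> Prop) -> Prop) : Prop :=
  forall D : nat -> T -> Prop,
    (forall n, op (D n) /\ dense op (D n)) ->
    dense op (fun x => forall n, D n x).

Definition prod_open {I : Type} (T : I -> Type)
    (op : forall i, (T i -> Prop) -> Prop) (U : (forall i, T i) -> Prop) : Prop :=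
  forall x, U x -> exists (l : list I) (V : forall i, T i -> Prop),
    (forall i, In i l -> op i (V i)) /\
    (forall i, In i l -> V i (x i)) /\
    (forall y, (forall i, In i l -> V i (y i)) -> U y).

Definition krom_seq (X : TopSpace) (f : nat -> X -> Prop) : Prop :=
  (forall n, is_open X (f n) /\ exists x, f n x) /\
  (forall k x, f (S k) x -> f k x) /\
  (exists x, forall n, f n x).

Definition Krom (X : TopSpace) : Type := { f : nat -> X -> Prop | krom_seq X f }.

(* Topology of K(X) as a subspace of tau^omega, tau discrete: U is open iff
   every g in U has a basic neighbourhood [g|(n+1)] (sequences agreeing with g
   on the first n+1 terms, equality of terms being equality of subsets of X)
   contained in U. *)
Definition krom_open (X : TopSpace) (U : Krom X -> Prop) : Prop :=
  forall g, U g -> exists n : nat, forall g' : Krom X,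
    (forall k, k <= n -> forall x, proj1_sig g' k x <-> proj1_sig g k x) -> U g'.

(* Main.v *)
Require Import Defs.
From Stdlib Require Import List Classical ClassicalEpsilon FunctionalExtensionality PropExtensionality Lia Arith.
From mathcomp Require classical_sets boolp.

Definition kv {Y : TopSpace} (g : Krom Y) : nat -> Y -> Prop := proj1_sig g.
Definition agree {Y : Type} (f g : nat -> Y -> Prop) (N : nat) : Prop :=
  forall k, k <= N -> forall x, f k x <-> g k x.

Lemma kv_open (Y : TopSpace) (g : Krom Y) k : is_open Y (kv g k).
Proof. exact (proj1 (proj1 (proj2_sig g) k)). Qed.

Lemma kv_ne (Y : TopSpace) (g : Krom Y) k : exists x, kv g k x.
Proof. exact (proj2 (proj1 (proj2_sig g) k)). Qed.

Lemma kv_mono (Y : TopSpace) (g : Krom Y) m n x : m <= n -> kv g n x -> kv g m x.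
Proof.
  intros H; induction H; auto.
  intro Hx; apply IHle. exact (proj1 (proj2 (proj2_sig g)) m0 x Hx).
Qed.

Lemma kv_pt (Y : TopSpace) (g : Krom Y) : exists x, forall n, kv g n x.
Proof. exact (proj2 (proj2 (proj2_sig g))). Qed.

Lemma open_impl (Y : TopSpace) (P : Prop) (U : Y -> Prop) :
  (P -> is_open Y U) -> is_open Y (fun z => P -> U z).
Proof.
  intro H. destruct (classic P) as [p|np].
  - replace (fun z => P -> U z) with U. exact (H p).
    apply functional_extensionality; intro z; apply propositional_extensionality; tauto.
  - replace (fun z => P -> U z) with (fun _ : Y => True). apply open_setT.
    apply functional_extensionality; intro z; apply propositional_extensionality; tauto.
Qed.

Lemma agree_refl {Y} (f : nat -> Y -> Prop) N : agree f f N.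
Proof. intros k _ x; tauto. Qed.
Lemma agree_sym {Y} (f g : nat -> Y -> Prop) N : agree f g N -> agree g f N.
Proof. intros H k Hk x; specialize (H k Hk x); tauto. Qed.
Lemma agree_trans {Y} (f g h : nat -> Y -> Prop) N : agree f g N -> agree g h N -> agree f h N.
Proof. intros H1 H2 k Hk x; specialize (H1 k Hk x); specialize (H2 k Hk x); tauto. Qed.
Lemma agree_le {Y} (f g : nat -> Y -> Prop) m n : m <= n -> agree f g n -> agree f g m.
Proof. intros Hmn H k Hk; apply H; lia. Qed.

Definition konst {Y : TopSpace} (y : Y) : Krom Y.
Proof.
  exists (fun _ _ => True). split; [|split].
  - intro n; split; [apply open_setT| exists y; exact I].
  - intros; exact I.
  - exists y; intros; exact I.
Defined.

Lemma bound_list {I : Type} (l : list I) (P : I -> nat -> Prop) :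
  (forall i, In i l -> exists n, P i n) -> (forall i m n, m <= n -> P i m -> P i n) ->
  exists M, forall i, In i l -> P i M.
Proof.
  intros H Hm. induction l as [|a l IH].
  - exists 0; intros i [].
  - destruct IH as [M HM]. { intros i Hi; apply H; right; exact Hi. }
    destruct (H a (or_introl eq_refl)) as [n Hn].
    exists (Nat.max M n). intros i [<-|Hi].
    + apply (Hm _ n); [lia|exact Hn].
    + apply (Hm _ M); [lia|apply HM; exact Hi].
Qed.
Module MD.
Import classical_sets.
Lemma maxdisj {Q Y : Type} (B : Q -> Y -> Prop) (D : Q -> Prop) :
  exists E : Q -> Prop, (forall q, E q -> D q) /\
    (forall q q', E q -> E q' -> (exists y, B q y /\ B q' y) -> q = q') /\
    (forall q, D q -> (exists y, B q y) -> exists q', E q' /\ exists y, B q y /\ B q' y).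
Proof.
destruct (ex_maximal_disjoint_subcollection B D) as [E [HED Htr Hmax]].
exists E; split; [exact HED|split].
- intros q q' Eq Eq' [y [h1 h2]]. apply (Htr q q' Eq Eq'). exists y. split; assumption.
- intros q Dq [y0 Hy0]. apply NNPP; intro Hn.
  assert (nE : ~ E q).
  { intro Eq; apply Hn; exists q; split; [exact Eq| exists y0; split; exact Hy0]. }
  apply (Hmax (fun z => E z \/ z = q)).
  + split. { intros z Ez. cbv beta. left; exact Ez. }
    intro H. exact (nE (H q (or_intror eq_refl))).
  + intros z [Ez| ->]; [apply HED; exact Ez| exact Dq].
  + intros i j Hi Hj [y [b1 b2]].
    destruct Hi as [Ei| ->]; destruct Hj as [Ej| ->]; auto.
    * apply Htr; auto. exists y; split; auto.
    * exfalso; apply Hn; exists i; split; auto; exists y; split; auto.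
    * exfalso; apply Hn; exists j; split; auto; exists y; split; auto.
Qed.
End MD.

Section Main.
Variable I : Type.
Variable X : I -> TopSpace.

Local Notation PX := (forall i, carrier (X i)).
Local Notation opX := (prod_open (fun i => carrier (X i)) (fun i => is_open (X i))).
Local Notation PK := (forall i, Krom (X i)).
Local Notation opK := (prod_open (fun i => Krom (X i)) (fun i => krom_open (X i))).

Definition cyl (g : PK) (l : list I) (N : nat) (h : PK) : Prop :=
  forall i, In i l -> agree (kv (h i)) (kv (g i)) N.
Definition box (g : PK) (l : list I) (N : nat) (y : PX) : Prop :=
  forall i, In i l -> kv (g i) N (y i).
Definition boxV (l : list I) (V : forall i, X i -> Prop) (y : PX) : Prop :=
  forall i, In i l -> V i (y i).

Definition pt (G : PK) : PX :=
  fun i => proj1_sig (constructive_indefinite_description _ (kv_pt _ (G i))).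
Lemma pt_spec (G : PK) i n : kv (G i) n (pt G i).
Proof. unfold pt; destruct (constructive_indefinite_description _ _) as [x Hx]; apply Hx. Qed.
Lemma box_pt (G : PK) l N : box G l N (pt G).
Proof. intros i _; apply pt_spec. Qed.

Lemma box_open g l N : opX (box g l N).
Proof.
  intros y Hy. exists l, (fun i => kv (g i) N). split; [|split].
  - intros; apply kv_open.
  - exact Hy.
  - intros z Hz; exact Hz.
Qed.

Lemma open_of_cyl (U : PK -> Prop) :
  (forall g, U g -> exists l N, forall h, cyl g l N h -> U h) -> opK U.
Proof.
  intros H g Hg. destruct (H g Hg) as [l [N HN]].
  exists l, (fun i h' => agree (kv h') (kv (g i)) N). split; [|split].
  - intros i _ h' Hh'. exists N. intros g' Hg'. exact (agree_trans _ _ _ _ Hg' Hh').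
  - intros i _; apply agree_refl.
  - intros y Hy; apply HN; exact Hy.
Qed.

Lemma cyl_open g l N : opK (cyl g l N).
Proof.
  apply open_of_cyl. intros h Hh. exists l, N. intros h' Hh' i Hi.
  exact (agree_trans _ _ _ _ (Hh' i Hi) (Hh i Hi)).
Qed.

Lemma cyl_refl g l N : cyl g l N g.
Proof. intros i _; apply agree_refl. Qed.

Lemma cyl_in_open (U : PK -> Prop) g : opK U -> U g -> exists l N, forall h, cyl g l N h -> U h.
Proof.
  intros HU Hg. destruct (HU g Hg) as [l [V [HV1 [HV2 HV3]]]].
  destruct (bound_list l (fun i n => forall h', agree (kv h') (kv (g i)) n -> V i h')) as [M HM].
  - intros i Hi. destruct (HV1 i Hi (g i) (HV2 i Hi)) as [n Hn]. exists n. exact Hn.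
  - intros i m n Hmn Hm h' Hh'. apply Hm. exact (agree_le _ _ _ _ Hmn Hh').
  - exists l, M. intros h Hh. apply HV3. intros i Hi. apply (HM i Hi). apply Hh; exact Hi.
Qed.

Lemma refine0 (g : PK) l N (y : PX) l1 (V : forall i, X i -> Prop) :
  box g l N y -> boxV l1 V y -> (forall i, In i l1 -> is_open (X i) (V i)) ->
  exists g1 : PK, cyl g l N g1 /\ (forall z, box g1 l1 (S N) z -> boxV l1 V z).
Proof.
  intros Hy HyV HVo.
  pose (F := fun i k z => (In i l -> kv (g i) (Nat.min k N) z) /\ (N < k -> In i l1 -> V i z)).
  assert (HF : forall i, krom_seq (X i) (F i)).
  { intro i. assert (Hyi : forall k, F i k (y i)).
    { intro k. split.
      - intro Hi. apply (kv_mono _ _ _ N); [lia| apply Hy; exact Hi].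
      - intros _ Hi; apply HyV; exact Hi. }
    split; [|split].
    - intro k. split; [| exists (y i); apply Hyi].
      apply open_setI.
      + apply open_impl; intros; apply kv_open.
      + apply open_impl; intro; apply open_impl; intro Hi; apply HVo; exact Hi.
    - intros k z [H1 H2]. split.
      + intro Hi. apply (kv_mono _ _ _ (Nat.min (S k) N)); [lia| apply H1; exact Hi].
      + intros Hk Hi. apply H2; [lia| exact Hi].
    - exists (y i); apply Hyi. }
  exists (fun i => exist _ (F i) (HF i)). split.
  - intros i Hi k Hk z. unfold kv; simpl. unfold F.
    replace (Nat.min k N) with k by lia. split.
    + intros [H1 _]; apply H1; exact Hi.
    + intro H; split; [intros _; exact H| intros; lia].
  - intros z Hz i Hi. specialize (Hz i Hi). unfold kv in Hz; simpl in Hz.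
    apply (proj2 Hz); [lia| exact Hi].
Qed.

Definition ext (g2 : PK) (l2 : list I) (N2 : nat) (g : PK) (l : list I) (N : nat) : Prop :=
  (forall i, In i l -> In i l2) /\ N <= N2 /\ cyl g l N g2.

Lemma refineE (E : PK -> Prop) (g : PK) l N (y : PX) l1 (V : forall i, X i -> Prop) B :
  opK E -> dense opK E ->
  box g l N y -> boxV l1 V y -> (forall i, In i l1 -> is_open (X i) (V i)) ->
  exists g2 l2 N2, ext g2 l2 N2 g l N /\ (forall h, cyl g2 l2 N2 h -> E h) /\ B <= N2 /\
    (forall z, box g2 l2 N2 z -> boxV l1 V z).
Proof.
  intros HEo HEd Hy HyV HVo.
  destruct (refine0 g l N y l1 V Hy HyV HVo) as [g1 [Hg1 Hg1b]].
  destruct (HEd (cyl g1 (l ++ l1) (S N)) (cyl_open _ _ _) (ex_intro _ g1 (cyl_refl _ _ _)))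
    as [g3 [Hg3c Hg3E]].
  destruct (cyl_in_open E g3 HEo Hg3E) as [l3 [M HM]].
  exists g3, (l ++ l1 ++ l3), (Nat.max (Nat.max (S N) M) B). split; [|split; [|split]].
  - split; [|split].
    + intros i Hi; apply in_or_app; left; exact Hi.
    + lia.
    + intros i Hi. apply (agree_trans _ (kv (g1 i))).
      * apply (agree_le _ _ N (S N)); [lia|]. apply Hg3c. apply in_or_app; left; exact Hi.
      * apply Hg1; exact Hi.
  - intros h Hh. apply HM. intros i Hi. apply (agree_le _ _ M (Nat.max (Nat.max (S N) M) B)); [lia|].
    apply Hh. apply in_or_app; right; apply in_or_app; right; exact Hi.
  - lia.
  - intros z Hz. apply Hg1b. intros i Hi.
    assert (Hi' : In i (l ++ l1)) by (apply in_or_app; right; exact Hi).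
    apply (Hg3c i Hi' (S N) (le_n _)).
    apply (kv_mono _ _ _ (Nat.max (Nat.max (S N) M) B)); [lia|].
    apply Hz. apply in_or_app; right; apply in_or_app; left; exact Hi.
Qed.

Lemma dirKX : baire PK opK -> baire PX opX.
Proof.
  intros HK D HD.
  pose (E := fun n (g : PK) => exists l m, forall y, box g l m y -> D n y).
  assert (HE : forall n, opK (E n) /\ dense opK (E n)).
  { intro n. split.
    - apply open_of_cyl. intros g [l [m Hg]]. exists l, m. intros h Hh.
      exists l, m. intros y Hy. apply Hg. intros i Hi.
      apply (Hh i Hi m (le_n _)). apply Hy; exact Hi.
    - intros U HU [g0 Hg0].
      destruct (cyl_in_open U g0 HU Hg0) as [l [N HN]].
      destruct (proj2 (HD n) (box g0 l N) (box_open _ _ _) (ex_intro _ _ (box_pt g0 l N)))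
        as [y [Hy HDy]].
      destruct (proj1 (HD n) y HDy) as [l1 [V [HV1 [HV2 HV3]]]].
      destruct (refine0 g0 l N y l1 V Hy HV2 HV1) as [g1 [Hg1 Hg1b]].
      exists g1. split; [apply HN; exact Hg1|].
      exists l1, (S N). intros z Hz. apply HV3. apply Hg1b. exact Hz. }
  intros U HU [x0 Hx0].
  destruct (HU x0 Hx0) as [l [V [HV1 [HV2 HV3]]]].
  pose (g := fun i => konst (x0 i)).
  destruct (refine0 g nil 0 x0 l V (fun i H => match H with end) HV2 HV1) as [g1 [_ Hg1b]].
  destruct (HK E HE (cyl g1 l 1) (cyl_open _ _ _) (ex_intro _ g1 (cyl_refl _ _ _)))
    as [G [HG HGE]].
  exists (pt G). split.
  - apply HV3. apply Hg1b. intros i Hi. apply (HG i Hi 1 (le_n _)). apply pt_spec.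
  - intro n. destruct (HGE n) as [l' [m Hm]]. apply Hm. apply box_pt.
Qed.

Record QQ := mkQ { qg : PK; ql : list I; qN : nat }.
Definition boxq (q : QQ) := box (qg q) (ql q) (qN q).
Definition cylq (q : QQ) := cyl (qg q) (ql q) (qN q).
Definition extq (q' q : QQ) := ext (qg q') (ql q') (qN q') (qg q) (ql q) (qN q).

Lemma extq_box q' q y : extq q' q -> boxq q' y -> boxq q y.
Proof.
  intros [Hl [HN Hc]] Hy i Hi. apply (Hc i Hi (qN q) (le_n _)).
  apply (kv_mono _ _ _ (qN q')); [exact HN| apply Hy; apply Hl; exact Hi].
Qed.

Lemma extq_refl q : extq q q.
Proof. split; [|split]; [tauto| lia| apply cyl_refl]. Qed.

Lemma extq_trans q2 q1 q0 : extq q2 q1 -> extq q1 q0 -> extq q2 q0.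
Proof.
  intros [Hl2 [HN2 Hc2]] [Hl1 [HN1 Hc1]]. split; [|split].
  - intros i Hi; apply Hl2, Hl1, Hi.
  - lia.
  - intros i Hi. apply (agree_trans _ (kv (qg q1 i))).
    + apply (agree_le _ _ _ (qN q1)); [exact HN1|]. apply Hc2, Hl1, Hi.
    + apply Hc1, Hi.
Qed.

Definition Cand (E : nat -> PK -> Prop) (Lv : QQ -> Prop) (n : nat) (q : QQ) : Prop :=
  (forall h, cylq q h -> E n h) /\ S n <= qN q /\ exists p, Lv p /\ extq q p.

Definition next (E : nat -> PK -> Prop) (Lv : QQ -> Prop) (n : nat) : QQ -> Prop :=
  proj1_sig (constructive_indefinite_description _ (MD.maxdisj boxq (Cand E Lv n))).

Lemma next_spec E Lv n :
  (forall q, next E Lv n q -> Cand E Lv n q) /\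
  (forall q q', next E Lv n q -> next E Lv n q' -> (exists y, boxq q y /\ boxq q' y) -> q = q') /\
  (forall q, Cand E Lv n q -> (exists y, boxq q y) -> exists q', next E Lv n q' /\ exists y, boxq q y /\ boxq q' y).
Proof.
  unfold next. destruct (constructive_indefinite_description _ _) as [T HT]. exact HT.
Qed.

Fixpoint lev (E : nat -> PK -> Prop) (qW : QQ) (n : nat) : QQ -> Prop :=
  match n with
  | 0 => fun q => q = qW
  | S m => next E (lev E qW m) m
  end.

Lemma lev_N E qW n q : lev E qW n q -> n <= qN q.
Proof.
  destruct n; simpl; intro H. lia. apply (next_spec E (lev E qW n) n), H.
Qed.

Lemma lev_disj E qW n q q' : lev E qW n q -> lev E qW n q' ->
  (exists y, boxq q y /\ boxq q' y) -> q = q'.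
Proof.
  destruct n; simpl. intros -> ->; auto. apply (next_spec E (lev E qW n) n).
Qed.

Lemma dirXK : baire PX opX -> baire PK opK.
Proof.
  intros HX E HE W HW [gW HgW].
  destruct (cyl_in_open W gW HW HgW) as [lW [NW HWc]].
  pose (qW := mkQ gW lW NW).
  pose (Ext := fun y : PX => exists l (V : forall i, X i -> Prop),
     (forall i, In i l -> is_open (X i) (V i)) /\ boxV l V y /\ forall z, boxV l V z -> ~ boxq qW z).
  pose (Dn := fun n y => (exists q, lev E qW n q /\ boxq q y) \/ Ext y).
  assert (HDo : forall n, opX (Dn n)).
  { intros n y [[q [Hq Hy]] | [l [V [HV1 [HV2 HV3]]]]].
    - destruct (box_open (qg q) (ql q) (qN q) y Hy) as [l [V [HV1 [HV2 HV3]]]].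
      exists l, V. split; [exact HV1| split; [exact HV2|]].
      intros z Hz. left. exists q. split; [exact Hq| apply HV3; exact Hz].
    - exists l, V. split; [exact HV1| split; [exact HV2|]].
      intros z Hz. right. exists l, V. split; [exact HV1| split; [exact Hz| exact HV3]]. }
  assert (HDd : forall n U, opX U -> (exists x, U x) -> exists x, U x /\ Dn n x).
  { induction n as [|n IH]; intros U HU [x0 Hx0].
    - destruct (classic (exists z, U z /\ boxq qW z)) as [[z [Hz1 Hz2]]|Hn].
      + exists z. split; [exact Hz1|]. left. exists qW. split; [reflexivity| exact Hz2].
      + exists x0. split; [exact Hx0|]. right.
        destruct (HU x0 Hx0) as [l [V [HV1 [HV2 HV3]]]].
        exists l, V. split; [exact HV1| split; [exact HV2|]].
        intros z Hz Hb. apply Hn. exists z. split; [apply HV3; exact Hz| exact Hb].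
    - destruct (IH U HU (ex_intro _ x0 Hx0)) as [y [HUy [[p [Hp Hpy]] | HEy]]].
      + destruct (HU y HUy) as [l1 [V [HV1 [HV2 HV3]]]].
        destruct (refineE (E n) (qg p) (ql p) (qN p) y l1 V (S n)
                    (proj1 (HE n)) (proj2 (HE n)) Hpy HV2 HV1)
          as [g2 [l2 [N2 [Hext [HcE [HB Hbx]]]]]].
        pose (q := mkQ g2 l2 N2).
        assert (Hc : Cand E (lev E qW n) n q).
        { split; [exact HcE| split; [exact HB| exists p; split; [exact Hp| exact Hext]]]. }
        destruct (proj2 (proj2 (next_spec E (lev E qW n) n)) q Hc (ex_intro _ _ (box_pt g2 l2 N2)))
          as [q' [Hq' [z [Hz1 Hz2]]]].
        exists z. split.
        * apply HV3. apply Hbx. exact Hz1.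
        * left. exists q'. split; [exact Hq'| exact Hz2].
      + exists y. split; [exact HUy| right; exact HEy]. }
  destruct (HX Dn (fun n => conj (HDo n) (HDd n)) (boxq qW) (box_open _ _ _)
              (ex_intro _ _ (box_pt gW lW NW))) as [x [HxW Hx]].
  assert (Hq : forall n, exists q, lev E qW n q /\ boxq q x).
  { intro n. destruct (Hx n) as [H|[l [V [_ [H1 H2]]]]]; [exact H|].
    exfalso. exact (H2 x H1 HxW). }
  pose (qs := fun n => proj1_sig (constructive_indefinite_description _ (Hq n))).
  assert (Hqs : forall n, lev E qW n (qs n) /\ boxq (qs n) x).
  { intro n. unfold qs. destruct (constructive_indefinite_description _ _) as [q Hq']. exact Hq'. }
  assert (Hstep : forall n, extq (qs (S n)) (qs n)).
  { intro n. destruct (Hqs (S n)) as [H1 H2]. simpl in H1.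
    destruct (proj1 (next_spec E (lev E qW n) n) _ H1) as [_ [_ [p [Hp Hext]]]].
    replace (qs n) with p; [exact Hext|].
    apply (lev_disj E qW n); [exact Hp| apply Hqs|].
    exists x. split; [exact (extq_box _ _ _ Hext H2)| apply Hqs]. }
  assert (Hchain : forall a m, a <= m -> extq (qs m) (qs a)).
  { intros a m H. induction H. apply extq_refl.
    exact (extq_trans _ _ _ (Hstep m) IHle). }
  assert (HG : forall i, exists Gi : Krom (X i), forall n, In i (ql (qs n)) ->
                 agree (kv Gi) (kv (qg (qs n) i)) (qN (qs n))).
  { intro i. destruct (classic (exists n0, In i (ql (qs n0)))) as [[n0 Hn0]|Hno].
    - pose (f := fun k => kv (qg (qs (Nat.max k n0)) i) k).
      assert (Hin : forall a, n0 <= a -> In i (ql (qs a))).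
      { intros a Ha. apply (proj1 (Hchain n0 a Ha)), Hn0. }
      assert (HNa : forall a, a <= qN (qs a)).
      { intro a. apply (lev_N E qW), Hqs. }
      assert (Hf : forall k m, Nat.max k n0 <= m -> agree (kv (qg (qs m) i)) (kv (qg (qs (Nat.max k n0)) i)) k).
      { intros k m Hm. apply (agree_le _ _ _ (qN (qs (Nat.max k n0)))).
        - specialize (HNa (Nat.max k n0)); lia.
        - apply (proj2 (proj2 (Hchain _ _ Hm))). apply Hin. lia. }
      assert (Hks : krom_seq (X i) f).
      { split; [|split].
        - intro k. split; [apply kv_open| apply kv_ne].
        - intros k z Hz. unfold f in *.
          apply (Hf k (Nat.max (S k) n0) ltac:(lia) k (le_n _)).
          exact (proj1 (proj2 (proj2_sig (qg (qs (Nat.max (S k) n0)) i))) k z Hz).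
        - exists (x i). intro k. unfold f.
          apply (kv_mono _ _ _ (qN (qs (Nat.max k n0)))).
          + specialize (HNa (Nat.max k n0)); lia.
          + apply (proj2 (Hqs _)). apply Hin; lia. }
      exists (exist _ f Hks). intros n Hn k Hk z. unfold kv at 1; simpl. unfold f.
      pose (m := Nat.max (Nat.max k n0) n).
      rewrite <- (Hf k m ltac:(lia) k (le_n _) z).
      apply (proj2 (proj2 (Hchain n m ltac:(lia))) i Hn k Hk z).
    - exists (qg (qs 0) i). intros n Hn. exfalso; apply Hno; exists n; exact Hn. }
  pose (G := fun i => proj1_sig (constructive_indefinite_description _ (HG i))).
  assert (HGc : forall n, cylq (qs n) G).
  { intros n i Hi. unfold G. destruct (constructive_indefinite_description _ _) as [Gi HGi].
    apply HGi, Hi. }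
  exists G. split.
  - apply HWc. pose proof (HGc 0) as H0. destruct (Hqs 0) as [Hl0 _]. simpl in Hl0.
    rewrite Hl0 in H0. exact H0.
  - intro n. destruct (Hqs (S n)) as [H1 _]. simpl in H1.
    apply (proj1 (proj1 (next_spec E (lev E qW n) n) _ H1)). apply HGc.
Qed.

End Main.

Theorem theorem4p1 (I : Type) (X : I -> TopSpace) :
  baire (forall i, X i) (prod_open (fun i => carrier (X i)) (fun i => is_open (X i)))
  <->
  baire (forall i, Krom (X i)) (prod_open (fun i => Krom (X i)) (fun i => krom_open (X i))).
Proof.
  split; [apply dirXK| apply dirKX].
Qed.
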